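(* Let $G=(V,E)$ and $\hat G=(V,\hat E)$ be connected graphs with $\hat E\subseteq E$, let $A\subseteq V$ be nonempty and let $U\subseteq V$. If $\delta(u,v)=\hat\delta(u,v)$ for every pair $(u,v)\in\Big(\bigcup_{a\in A}\hat N_2(a)\Big)\times U$, then $D_a=\hat D_a$ for every $a\in A$.
   Context: $\delta$, $\hat\delta$ are the shortest-path metrics of the unweighted graphs $G$, $\hat G$. For $S\subseteq V$, $\delta(S,v)=\min_{s\in S}\delta(s,v)$ and similarly for $\hat\delta$. $N_2(a)=\{u\in V:\delta(u,a)\le2\}$ and $\hat N_2(a)=\{u\in V:\hat\delta(u,a)\le2\}$. For $w\in V$, $C_A(w)=\{v\in V:\delta(w,v)<\delta(A,v)\}$ and $\hat C_A(w)=\{v\in V:\hat\delta(w,v)<\hat\delta(A,v)\}$. For $a\in A$, $D_a=\Big(\bigcup_{b\in N_2(a)}C_A(b)\cup N_2(a)\Big)\cap U$ and $\hat D_a=\Big(\bigcup_{b\in \hat N_2(a)}\hat C_A(b)\cup \hat N_2(a)\Big)\cap U$. *)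

(* Defs.v *)
From mathcomp Require Import all_boot.
Set Implicit Arguments. Unset Strict Implicit. Unset Printing Implicit Defensive.

Section Graphs.
Variable T : finType.

Definition simple_graph (e : rel T) : Prop := symmetric e /\ irreflexive e.

Definition connected_graph (e : rel T) : Prop := forall x y : T, connect e x y.

Definition walk_of_length (e : rel T) (n : nat) (x y : T) : bool :=
  [exists p : n.-tuple T, path e x p && (last x p == y)].

(* Shortest-path distance delta(x,y): least n with a walk of length n from x to y.
   (Every shortest walk in a connected graph has fewer than #|T| edges, so the
   search range iota 0 #|T| suffices; unreachable pairs would get #|T|.) *)
Definition dist (e : rel T) (x y : T) : nat :=
  find (fun n => walk_of_length e n x y) (iota 0 #|T|).

(* delta(S,v) = min_{s in S} delta(s,v)  (only used for nonempty S). *)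
Definition setdist (e : rel T) (S : {set T}) (v : T) : nat :=
  \big[minn/#|T|]_(s in S) dist e s v.

Definition N2 (e : rel T) (a : T) : {set T} := [set u | dist e u a <= 2].

Definition Cl (e : rel T) (A : {set T}) (w : T) : {set T} :=
  [set v | dist e w v < setdist e A v].

Definition Dset (e : rel T) (A U : {set T}) (a : T) : {set T} :=
  ((\bigcup_(b in N2 e a) Cl e A b) :|: N2 e a) :&: U.

End Graphs.

(* Main.v *)
Require Import Defs.
From mathcomp Require Import all_boot.
From mathcomp Require Import zify.

Section Aux.
Variable T : finType.
Implicit Types (e : rel T) (x y z : T).

Lemma walkP e n x y : walk_of_length e n x y <->
  exists p : seq T, [/\ size p = n, path e x p & last x p = y].
Proof.
split.
  case/existsP => t /andP[Hp /eqP Hl]; exists (val t); split => //.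
  exact: size_tuple.
case=> p [Hs Hp Hl]; have Hs' : size p == n by apply/eqP.
apply/existsP; exists (Tuple Hs'); rewrite /= Hp /=; exact/eqP.
Qed.

Lemma dist_le e n x y : walk_of_length e n x y -> dist e x y <= n.
Proof.
move=> W; rewrite /dist.
case: (ltnP n #|T|) => Hn.
  rewrite leqNgt; apply/negP => H.
  have := before_find 0 H; rewrite nth_iota // add0n W //.
apply: leq_trans (find_size _ _) _; by rewrite size_iota.
Qed.

Lemma dist_walk e x y : connected_graph e -> walk_of_length e (dist e x y) x y.
Proof.
move=> C; have := C x y; case/connectP => p Hp ->.
case: (shortenP Hp) => p' Hp' Hu _.
have Hsz : size p' < #|T|.
  have := max_card (mem (x :: p')); rewrite (card_uniqP Hu) //.
have Hh : has (fun n => walk_of_length e n x (last x p')) (iota 0 #|T|).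
  apply/hasP; exists (size p'); first by rewrite mem_iota.
  by apply/walkP; exists p'.
have := nth_find 0 Hh; move: Hh; rewrite has_find => Hf.
rewrite nth_iota; last by rewrite size_iota in Hf.
by rewrite add0n.
Qed.

Lemma walk_cat e n m x y z : walk_of_length e n x y -> walk_of_length e m y z ->
  walk_of_length e (n + m) x z.
Proof.
move=> /walkP [p [Hs Hp Hl]] /walkP [q [Hs' Hq Hl']].
apply/walkP; exists (p ++ q); split.
- by rewrite size_cat Hs Hs'.
- by rewrite cat_path Hp Hl Hq.
- by rewrite last_cat Hl.
Qed.

Lemma walk_rev e n x y : symmetric e -> walk_of_length e n x y -> walk_of_length e n y x.
Proof.
move=> S /walkP [p [Hs Hp Hl]].
apply/walkP; exists (rev (belast x p)); split.
- by rewrite size_rev size_belast.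
- rewrite -Hl rev_path; apply: sub_path Hp => u v; by rewrite S.
- rewrite -Hl; case: p {Hs Hp Hl} => [|w p] //; by rewrite [belast _ _]/= rev_cons last_rcons.
Qed.

Lemma walk_split e k x y : 2 <= k -> walk_of_length e k x y ->
  exists q, walk_of_length e 2 x q /\ walk_of_length e (k - 2) q y.
Proof.
move=> Hk /walkP [p [Hs Hp Hl]].
exists (last x (take 2 p)).
move: Hp Hl; rewrite -{1 2}(cat_take_drop 2 p) cat_path last_cat => /andP[H1 H2] Hl.
split; apply/walkP.
- exists (take 2 p); split => //; by rewrite size_takel // Hs.
- exists (drop 2 p); split => //; by rewrite size_drop Hs.
Qed.

Lemma dist_sym e x y : symmetric e -> connected_graph e -> dist e x y = dist e y x.
Proof.
move=> S C; apply/eqP; rewrite eqn_leq.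
by rewrite !dist_le // walk_rev // dist_walk.
Qed.

Lemma dist_tri e x y z : connected_graph e -> dist e x z <= dist e x y + dist e y z.
Proof. move=> C; apply: dist_le; apply: walk_cat; exact: dist_walk. Qed.

Lemma dist_refl e x : dist e x x = 0.
Proof. apply/eqP; rewrite -leqn0; apply: dist_le; apply/walkP; by exists [::]. Qed.

Lemma dist_mono e e' x y : subrel e' e -> connected_graph e' -> dist e x y <= dist e' x y.
Proof.
move=> Hs C; apply: dist_le; have /walkP [p [Hz Hp Hl]] := dist_walk e' x y C.
apply/walkP; exists p; split => //; exact: sub_path Hp.
Qed.

End Aux.

Theorem lemma7 (T : finType) (e ehat : rel T) (A U : {set T})
  (He : simple_graph e) (Hehat : simple_graph ehat)
  (Ce : connected_graph e) (Cehat : connected_graph ehat)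
  (Hsub : subrel ehat e)
  (HA : A != set0)
  (Hagree : forall u v : T, u \in \bigcup_(a in A) N2 ehat a -> v \in U ->
              dist e u v = dist ehat u v) :
  forall a : T, a \in A -> Dset e A U a = Dset ehat A U a.
Proof.
move=> a Ha; case: He => Se _; case: Hehat => Sh _.
have inN : forall u, dist ehat u a <= 2 -> u \in \bigcup_(a in A) N2 ehat a.
  by move=> u Hu; apply/bigcupP; exists a => //; rewrite inE.
apply/setP => v; rewrite /Dset !inE.
case Hv: (v \in U); last by rewrite !andbF.
rewrite !andbT.
have H0 : dist e a v = dist ehat a v by apply: Hagree => //; apply: inN; rewrite dist_refl.
have HN : (dist e v a <= 2) = (dist ehat v a <= 2).
  by rewrite (@dist_sym _ e v a Se Ce) (@dist_sym _ ehat v a Sh Cehat) H0.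
have HS : setdist e A v = setdist ehat A v.
  apply: eq_bigr => s Hs; apply: Hagree => //; apply/bigcupP; exists s => //.
  by rewrite inE dist_refl.
rewrite HN; apply/idP/idP; case/orP => [|->]; rewrite ?orbT //.
- case/bigcupP => b; rewrite !inE => Hb Hbv.
  case: (leqP (dist ehat a v) 2) => Hk.
    by rewrite (@dist_sym _ ehat v a Sh Cehat) Hk orbT.
  have [q [W1 W2]] := @walk_split T ehat _ a v (ltnW Hk) (@dist_walk T ehat a v Cehat).
  apply/orP; left; apply/bigcupP; exists q.
    by rewrite inE (@dist_sym _ ehat q a Sh Cehat); apply: dist_le.
  rewrite inE -HS.
  have Hq : dist ehat q a <= 2 by rewrite (@dist_sym _ ehat q a Sh Cehat); apply: dist_le.
  rewrite -(Hagree _ _ (inN _ Hq) Hv).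
  have Hq2 : dist e q v <= dist ehat a v - 2.
    by rewrite (Hagree _ _ (inN _ Hq) Hv); apply: dist_le.
  have Ht := @dist_tri T e a b v Ce.
  have Hab : dist e a b <= 2 by rewrite (@dist_sym _ e a b Se Ce).
  rewrite -H0 in Hq2; lia.
- case/bigcupP => b; rewrite !inE => Hb Hbv.
  apply/orP; left; apply/bigcupP; exists b.
    rewrite inE; apply: leq_trans Hb; exact: dist_mono.
  by rewrite inE HS (Hagree _ _ (inN _ Hb) Hv).
Qed.
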